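(* As $n\to\infty$, $$\frac{\log_2(n)}{E_n(\gamma)}\to 1,$$ where $E_n(\gamma)$ is the average value of $\gamma(t)$ when $t$ is uniformly distributed on $\mathcal{T}_n$.
   Context: $\mathcal{T}_n$ is the set of ordered rooted binary trees (every internal node has exactly two ordered children) with $n$ leaves. A tree is a caterpillar if every node is either a leaf or has at least one leaf among its direct children. The subtree of $t$ at a node $v$ consists of $v$ and all its descendants, and $\gamma(t)$ is the largest number of leaves of a caterpillar occurring as the subtree of $t$ at some node. *)

(* Defs.v *)
From Stdlib Require Import Reals List.
Import ListNotations.

Inductive tree : Type :=
| Leaf : tree
| Node : tree -> tree -> tree.

Fixpoint leaves (t : tree) : nat :=
  match t with
  | Leaf => 1
  | Node l r => leaves l + leaves r
  end.

Definition is_leaf (t : tree) : bool :=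
  match t with Leaf => true | Node _ _ => false end.

Fixpoint caterpillar (t : tree) : bool :=
  match t with
  | Leaf => true
  | Node l r => (is_leaf l || is_leaf r) && caterpillar l && caterpillar r
  end.

Fixpoint subtrees (t : tree) : list tree :=
  match t with
  | Leaf => [Leaf]
  | Node l r => t :: (subtrees l ++ subtrees r)
  end.

Definition gamma (t : tree) : nat :=
  fold_right Nat.max 0 (map leaves (filter caterpillar (subtrees t))).

(* l enumerates T_n: exactly the trees with n leaves, each once *)
Definition enumerates (n : nat) (l : list tree) : Prop :=
  NoDup l /\ forall t, In t l <-> leaves t = n.

(* average of gamma over a list (uniform distribution on its elements) *)
Definition avg_gamma (l : list tree) : R :=
  fold_right Rplus 0%R (map (fun t => INR (gamma t)) l) / INR (length l).

Definition log2 (x : R) : R := (ln x / ln 2)%R.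

(* Main.v *)
Require Import Defs.
From Stdlib Require Import Reals List Lia Lra Psatz Permutation.
Import ListNotations.
Open Scope bool_scope.
Open Scope nat_scope.

Lemma leaves_pos t : 1 <= leaves t.
Proof. induction t; simpl; lia. Qed.

Lemma leaves_one t : leaves t = 1 -> t = Leaf.
Proof. destruct t; simpl; auto. pose proof (leaves_pos t1); pose proof (leaves_pos t2); lia. Qed.

Lemma fold_max_ub l x : In x l -> x <= fold_right Nat.max 0 l.
Proof. induction l; simpl; intros H; [easy|]. destruct H; subst; lia || (specialize (IHl H); lia). Qed.

Lemma fold_max_lub l B : (forall x, In x l -> x <= B) -> fold_right Nat.max 0 l <= B.
Proof. induction l; simpl; intros H; [lia|]. assert (a <= B) by auto. assert (fold_right Nat.max 0 l <= B) by auto. lia. Qed.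

Lemma fold_max_in l : fold_right Nat.max 0 l = 0 \/ In (fold_right Nat.max 0 l) l.
Proof. induction l; simpl; auto. destruct IHl as [H|H]; rewrite ?H.
  - destruct (Nat.eq_dec a 0); [left; lia| right; left; lia].
  - destruct (Nat.max_spec a (fold_right Nat.max 0 l)) as [[_ E]|[_ E]]; rewrite E; auto. Qed.

Lemma subtrees_self t : In t (subtrees t).
Proof. destruct t; simpl; auto. Qed.

Lemma subtrees_trans t s u : In s (subtrees t) -> In u (subtrees s) -> In u (subtrees t).
Proof. induction t; simpl; intros H1 H2.
  - destruct H1 as [<-|[]]; simpl in H2; auto.
  - destruct H1 as [<-|H1]; [exact H2|]. right. apply in_app_or in H1. apply in_or_app. destruct H1; auto. Qed.

Lemma subtrees_leaves t s : In s (subtrees t) -> leaves s <= leaves t.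
Proof. induction t; simpl; intros H.
  - destruct H as [<-|[]]; simpl; lia.
  - destruct H as [<-|H]; simpl; [lia|]. apply in_app_or in H. destruct H as [H|H]; [apply IHt1 in H|apply IHt2 in H]; lia. Qed.

Lemma gamma_le_leaves t : gamma t <= leaves t.
Proof. unfold gamma. apply fold_max_lub. intros x Hx. apply in_map_iff in Hx. destruct Hx as [s [<- Hs]].
  apply filter_In in Hs. apply subtrees_leaves, Hs. Qed.

Lemma gamma_mono t s : In s (subtrees t) -> gamma s <= gamma t.
Proof. intros H. unfold gamma at 1. apply fold_max_lub. intros x Hx. apply in_map_iff in Hx. destruct Hx as [u [<- Hu]].
  apply filter_In in Hu. destruct Hu as [Hu1 Hu2]. unfold gamma. apply fold_max_ub. apply in_map. apply filter_In. split; auto.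
  eapply subtrees_trans; eauto. Qed.

Lemma gamma_cat t : caterpillar t = true -> leaves t <= gamma t.
Proof. intros H. unfold gamma. apply fold_max_ub. apply in_map. apply filter_In. split; auto. apply subtrees_self. Qed.

Lemma sub_l l r : In l (subtrees (Node l r)).
Proof. cbn [subtrees]. right. apply in_or_app. left. apply subtrees_self. Qed.
Lemma sub_r l r : In r (subtrees (Node l r)).
Proof. cbn [subtrees]. right. apply in_or_app. right. apply subtrees_self. Qed.

Lemma cat_exact s k : caterpillar s = true -> 1 <= k <= leaves s ->
  exists s', In s' (subtrees s) /\ caterpillar s' = true /\ leaves s' = k.
Proof. induction s; intros Hc Hk.
  - exists Leaf. simpl in *. split; auto. split; auto. lia.
  - destruct (Nat.eq_dec k (leaves (Node s1 s2))) as [E|E].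
    + exists (Node s1 s2). split; [apply subtrees_self|]. auto.
    + simpl in Hc. apply andb_prop in Hc as [Hc Hc2]. apply andb_prop in Hc as [Hl Hc1].
      simpl in Hk. destruct s1; simpl in Hl.
      * destruct (IHs2 Hc2) as [s' [H1 H2]]; [simpl in E, Hk |- *; lia|]. exists s'. split; auto. eapply subtrees_trans; [apply sub_r|exact H1].
      * destruct s2; [|discriminate]. destruct (IHs1 Hc1) as [s' [H1 H2]]; [simpl in E, Hk |- *; lia|]. exists s'. split; auto. eapply subtrees_trans; [apply sub_l|exact H1]. Qed.

Lemma gamma_exact t k : 1 <= k <= gamma t -> exists s, In s (subtrees t) /\ caterpillar s = true /\ leaves s = k.
Proof. intros Hk. destruct (fold_max_in (map leaves (filter caterpillar (subtrees t)))) as [H|H];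
  fold (gamma t) in H; [lia|]. apply in_map_iff in H. destruct H as [s [Hs Hin]]. apply filter_In in Hin as [Hin Hc].
  destruct (cat_exact s k Hc) as [s' [H1 H2]]; [lia|]. exists s'. split; auto. eapply subtrees_trans; eauto. Qed.

Definition cc k t := length (filter (fun s => caterpillar s && Nat.eqb (leaves s) k) (subtrees t)).

Lemma cc_node k l r : cc k (Node l r) = ((if caterpillar (Node l r) && Nat.eqb (leaves (Node l r)) k then 1 else 0) + cc k l + cc k r)%nat.
Proof. unfold cc. cbn [subtrees filter]. destruct (caterpillar (Node l r) && Nat.eqb (leaves (Node l r)) k); cbn [length];
  rewrite filter_app, length_app; lia. Qed.

Lemma cc_pos k t : 1 <= k <= gamma t -> 1 <= cc k t.
Proof. intros H. destruct (gamma_exact t k H) as [s [H1 [H2 H3]]]. unfold cc.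
  assert (In s (filter (fun s => caterpillar s && Nat.eqb (leaves s) k) (subtrees t))).
  { apply filter_In. split; auto. rewrite H2, H3, Nat.eqb_refl. auto. }
  destruct (filter _ _); [easy|]. simpl; lia. Qed.

Lemma gamma_node_ge t l r : t = Node l r -> Nat.max (gamma l) (gamma r) <= gamma t.
Proof. intros ->. assert (gamma l <= gamma (Node l r)). { apply gamma_mono. simpl. right. apply in_or_app. left. apply subtrees_self. }
  assert (gamma r <= gamma (Node l r)). { apply gamma_mono. simpl. right. apply in_or_app. right. apply subtrees_self. } lia. Qed.

(* caterpillars with m+2 leaves *)
Fixpoint catlist (m : nat) : list tree :=
  match m with
  | O => [Node Leaf Leaf]
  | S m => map (fun t => Node Leaf t) (catlist m) ++ map (fun t => Node t Leaf) (catlist m)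
  end.

Lemma catlist_length m : length (catlist m) = 2 ^ m.
Proof. induction m; simpl; auto. rewrite length_app, !length_map. lia. Qed.

Lemma catlist_node m t : In t (catlist m) -> t <> Leaf.
Proof. destruct m; simpl; intros H.
  - destruct H as [<-|[]]; discriminate.
  - apply in_app_or in H. destruct H as [H|H]; apply in_map_iff in H; destruct H as [x [<- _]]; discriminate. Qed.

Lemma catlist_nodup m : NoDup (catlist m).
Proof. induction m; simpl.
  - constructor; [easy|constructor].
  - apply NoDup_app.
    + apply FinFun.Injective_map_NoDup; auto. intros x y H; injection H; auto.
    + apply FinFun.Injective_map_NoDup; auto. intros x y H; injection H; auto.
    + intros a Ha Hb. apply in_map_iff in Ha, Hb. destruct Ha as [x [<- Hx]]. destruct Hb as [y [E Hy]].
      injection E; intros; subst. eapply catlist_node; eauto. Qed.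

Lemma catlist_spec m t : In t (catlist m) <-> caterpillar t = true /\ leaves t = S (S m).
Proof. revert t; induction m; intros t; simpl; split.
  - intros [<-|[]]. simpl; auto.
  - intros [Hc Hl]. destruct t as [|l r]; simpl in Hl; [lia|].
    pose proof (leaves_pos l); pose proof (leaves_pos r).
    rewrite (leaves_one l), (leaves_one r); auto; lia.
  - intros H. apply in_app_or in H. destruct H as [H|H]; apply in_map_iff in H; destruct H as [x [<- Hx]];
      apply IHm in Hx; destruct Hx as [Hc Hl]; simpl; rewrite Hc; simpl; split; auto; try rewrite andb_true_r; auto; lia.
  - intros [Hc Hl]. destruct t as [|l r]; simpl in Hl; [lia|]. simpl in Hc.
    apply andb_prop in Hc as [Hc Hc2]. apply andb_prop in Hc as [Hlf Hc1].
    apply in_or_app. destruct l.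
    + left. apply (in_map (fun t => Node Leaf t)). apply IHm. simpl in Hl. split; auto; lia.
    + destruct r; [|discriminate]. right. apply (in_map (fun t => Node t Leaf)). apply IHm. split; auto. simpl in Hl |- *. lia. Qed.
Open Scope R_scope.

Fixpoint sr (g : nat -> R) (n : nat) : R :=
  match n with O => 0 | S m => sr g m + g m end.

Lemma sr_S g n : sr g (S n) = sr g n + g n. Proof. reflexivity. Qed.

Lemma sr_ext g h n : (forall i, (i < n)%nat -> g i = h i) -> sr g n = sr h n.
Proof. induction n; simpl; intros H; auto. rewrite IHn, H; auto. Qed.

Lemma sr_le g h n : (forall i, (i < n)%nat -> g i <= h i) -> sr g n <= sr h n.
Proof. induction n; simpl; intros H; [lra|]. assert (g n <= h n) by auto. assert (sr g n <= sr h n) by auto. lra. Qed.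

Lemma sr_nonneg g n : (forall i, (i < n)%nat -> 0 <= g i) -> 0 <= sr g n.
Proof. intros H. replace 0 with (sr (fun _ => 0) n). apply sr_le; auto. induction n; simpl; auto. rewrite IHn; auto; lra. Qed.

Lemma sr_plus g h n : sr (fun i => g i + h i) n = sr g n + sr h n.
Proof. induction n; simpl; lra. Qed.

Lemma sr_minus g h n : sr (fun i => g i - h i) n = sr g n - sr h n.
Proof. induction n; simpl; lra. Qed.

Lemma sr_scal c g n : sr (fun i => c * g i) n = c * sr g n.
Proof. induction n; simpl; [ring|]. rewrite IHn; ring. Qed.

Lemma sr_shift g n : sr g (S n) = g O + sr (fun i => g (S i)) n.
Proof. induction n; simpl in *; [ring|]. rewrite IHn. ring. Qed.

Lemma sr_split g p q : sr g (p + q) = sr g p + sr (fun i => g (p + i)%nat) q.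
Proof. induction q; simpl. rewrite Nat.add_0_r; ring. rewrite Nat.add_succ_r. simpl. rewrite IHq. ring. Qed.

Lemma sr_rev g n : sr g (S n) = sr (fun i => g (n - i)%nat) (S n).
Proof. revert g; induction n; intros g.
  - simpl. ring.
  - rewrite sr_shift, IHn. rewrite (sr_S (fun i => g (S n - i)%nat) (S n)).
    replace (S n - S n)%nat with O by lia. rewrite Rplus_comm. f_equal.
    apply sr_ext. intros i Hi. f_equal. lia. Qed.

Lemma sr_const c n : sr (fun _ => c) n = INR n * c.
Proof. induction n; [simpl; ring|]. rewrite sr_S, IHn, S_INR. ring. Qed.

Definition sL {A} (F : A -> R) (l : list A) : R := fold_right Rplus 0 (map F l).

Lemma sL_nil {A} (F : A -> R) : sL F [] = 0. Proof. reflexivity. Qed.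
Lemma sL_cons {A} (F : A -> R) x l : sL F (x :: l) = F x + sL F l. Proof. reflexivity. Qed.

Lemma sL_app {A} (F : A -> R) l1 l2 : sL F (l1 ++ l2) = sL F l1 + sL F l2.
Proof. induction l1; [rewrite sL_nil; simpl app; lra|]. simpl app. rewrite !sL_cons, IHl1. ring. Qed.

Lemma sL_ext_in {A} (F G : A -> R) l : (forall x, In x l -> F x = G x) -> sL F l = sL G l.
Proof. induction l; intros H; auto. rewrite !sL_cons. rewrite H, IHl; simpl; auto. intros; apply H; simpl; auto. Qed.

Lemma sL_le_in {A} (F G : A -> R) l : (forall x, In x l -> F x <= G x) -> sL F l <= sL G l.
Proof. induction l; intros H; rewrite ?sL_nil, ?sL_cons; [lra|]. assert (F a <= G a) by (apply H; simpl; auto).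
  assert (sL F l <= sL G l) by (apply IHl; intros; apply H; simpl; auto). lra. Qed.

Lemma sL_plus {A} (F G : A -> R) l : sL (fun x => F x + G x) l = sL F l + sL G l.
Proof. induction l; rewrite ?sL_nil, ?sL_cons; [lra|]. rewrite IHl. ring. Qed.

Lemma sL_minus {A} (F G : A -> R) l : sL (fun x => F x - G x) l = sL F l - sL G l.
Proof. induction l; rewrite ?sL_nil, ?sL_cons; [lra|]. rewrite IHl. ring. Qed.

Lemma sL_scal {A} c (F : A -> R) l : sL (fun x => c * F x) l = c * sL F l.
Proof. induction l; rewrite ?sL_nil, ?sL_cons; [lra|]. rewrite IHl. ring. Qed.

Lemma sL_const {A} c (l : list A) : sL (fun _ => c) l = c * INR (length l).
Proof. induction l; rewrite ?sL_nil, ?sL_cons; simpl length; [simpl; lra|]. rewrite IHl, S_INR. ring. Qed.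

Lemma sL_nonneg {A} (F : A -> R) l : (forall x, In x l -> 0 <= F x) -> 0 <= sL F l.
Proof. intros H. replace 0 with (sL (fun _ : A => 0) l). apply sL_le_in; auto. rewrite sL_const. ring. Qed.

Lemma sL_map {A B} (F : B -> R) (g : A -> B) l : sL F (map g l) = sL (fun x => F (g x)) l.
Proof. unfold sL. rewrite map_map. auto. Qed.

Lemma sL_flat_map {A B} (F : B -> R) (g : A -> list B) l : sL F (flat_map g l) = sL (fun x => sL F (g x)) l.
Proof. induction l; simpl flat_map; rewrite ?sL_nil, ?sL_cons; auto. rewrite sL_app, IHl. auto. Qed.

Lemma sL_seq (h : nat -> R) s n : sL h (seq s n) = sr (fun i => h (s + i)%nat) n.
Proof. revert s; induction n; intros s; auto. rewrite sr_shift. simpl seq. rewrite sL_cons, IHn. rewrite Nat.add_0_r.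
  f_equal. apply sr_ext; intros; f_equal; lia. Qed.

Lemma sL_perm {A} (F : A -> R) l l' : Permutation l l' -> sL F l = sL F l'.
Proof. induction 1; rewrite ?sL_cons; auto. rewrite IHPermutation; auto. ring. congruence. Qed.

Lemma sL_filter {A} (p : A -> bool) l : sL (fun x => if p x then 1 else 0) l = INR (length (filter p l)).
Proof. induction l; auto. rewrite sL_cons, IHl. simpl filter. destruct (p a); simpl length; rewrite ?S_INR; lra. Qed.

Lemma NoDup_flat_map_disj {A B} (f : A -> list B) (l : list A) :
  NoDup l -> (forall x, In x l -> NoDup (f x)) ->
  (forall x y z, In x l -> In y l -> In z (f x) -> In z (f y) -> x = y) ->
  NoDup (flat_map f l).
Proof. induction l; intros H1 H2 H3; simpl; [constructor|]. inversion H1; subst.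
  apply NoDup_app; auto.
  - apply H2; simpl; auto.
  - apply IHl; auto. intros; apply H2; simpl; auto. intros x y z Hx Hy; apply H3; simpl; auto.
  - intros z Hz Hz'. apply in_flat_map in Hz'. destruct Hz' as [y [Hy Hzy]].
    assert (a = y) by (apply (H3 a y z); simpl; auto). subst. contradiction. Qed.
Open Scope R_scope.

Lemma T0 (T : nat -> list tree) (hT : forall n, enumerates n (T n)) : T O = [].
Proof. destruct (T O) as [|t l] eqn:E; auto. exfalso. destruct (hT O) as [_ H].
  assert (leaves t = O) by (apply H; rewrite E; simpl; auto). pose proof (leaves_pos t). lia. Qed.

Lemma T1 (T : nat -> list tree) (hT : forall n, enumerates n (T n)) : Permutation (T 1%nat) [Leaf].
Proof. destruct (hT 1%nat) as [H1 H2]. apply NoDup_Permutation; auto. constructor; [easy|constructor].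
  intros x. rewrite H2. split.
  - intros H. apply leaves_one in H. subst. simpl; auto.
  - intros [<-|[]]. reflexivity. Qed.

Lemma sL_T1 (T : nat -> list tree) (hT : forall n, enumerates n (T n)) (F : tree -> R) : sL F (T 1%nat) = F Leaf.
Proof. rewrite (sL_perm F _ _ (T1 T hT)). rewrite sL_cons, sL_nil. ring. Qed.

Lemma decomp (T : nat -> list tree) (hT : forall n, enumerates n (T n)) n (F : tree -> R) : (2 <= n)%nat ->
  sL F (T n) = sr (fun i => sL (fun l => sL (fun r => F (Node l r)) (T (n - i)%nat)) (T i)) (S n).
Proof. intros Hn.
  set (D := flat_map (fun i => flat_map (fun l => map (Node l) (T (n - i)%nat)) (T i)) (seq 0 (S n))).
  assert (HP : Permutation (T n) D).
  { apply NoDup_Permutation.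
    - apply hT.
    - unfold D. apply NoDup_flat_map_disj.
      + apply seq_NoDup.
      + intros i _. apply NoDup_flat_map_disj.
        * apply hT.
        * intros l _. apply FinFun.Injective_map_NoDup; [|apply hT]. intros a b E; injection E; auto.
        * intros x y z _ _ Hx Hy. apply in_map_iff in Hx, Hy. destruct Hx as [a [<- _]]. destruct Hy as [b [E _]].
          injection E; auto.
      + intros i j z _ _ Hi Hj. apply in_flat_map in Hi, Hj. destruct Hi as [l [Hl Hz]]. destruct Hj as [l' [Hl' Hz']].
        apply in_map_iff in Hz, Hz'. destruct Hz as [r [<- _]]. destruct Hz' as [r' [E _]]. injection E; intros; subst.
        apply (proj2 (hT i)) in Hl. apply (proj2 (hT j)) in Hl'. congruence.
    - intros t. rewrite (proj2 (hT n)). unfold D. rewrite in_flat_map. split.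
      + intros Ht. destruct t as [|l r]; [simpl in Ht; lia|]. simpl in Ht. exists (leaves l). split.
        * apply in_seq. lia.
        * apply in_flat_map. exists l. split; [apply (proj2 (hT _)); auto|]. apply in_map. apply (proj2 (hT _)). lia.
      + intros [i [Hi Ht]]. apply in_seq in Hi. apply in_flat_map in Ht. destruct Ht as [l [Hl Ht]].
        apply in_map_iff in Ht. destruct Ht as [r [<- Hr]]. apply (proj2 (hT _)) in Hl, Hr. simpl. lia. }
  rewrite (sL_perm F _ _ HP). unfold D. rewrite sL_flat_map, sL_seq. apply sr_ext. intros i _. simpl (0 + i)%nat.
  rewrite sL_flat_map. apply sL_ext_in. intros l _. rewrite sL_map. auto. Qed.

Definition NN (T : nat -> list tree) n := INR (length (T n)).

Lemma NN_sL T n : NN T n = sL (fun _ => 1) (T n).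
Proof. unfold NN. rewrite sL_const. ring. Qed.

Lemma NN0 (T : nat -> list tree) (hT : forall n, enumerates n (T n)) : NN T O = 0.
Proof. unfold NN. rewrite (T0 T hT). reflexivity. Qed.

Lemma NN1 (T : nat -> list tree) (hT : forall n, enumerates n (T n)) : NN T 1%nat = 1.
Proof. rewrite NN_sL, sL_T1; auto. Qed.

Lemma NN_conv (T : nat -> list tree) (hT : forall n, enumerates n (T n)) n : (2 <= n)%nat -> NN T n = sr (fun i => NN T i * NN T (n - i)%nat) (S n).
Proof. intros Hn. rewrite NN_sL, (decomp T hT n); auto. apply sr_ext. intros i _.
  unfold NN. rewrite !sL_const. ring. Qed.
Open Scope R_scope.

Section Cat.
Variable N : nat -> R.
Hypothesis N0 : N O = 0.
Hypothesis N1 : N 1%nat = 1.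
Hypothesis Nconv : forall n, (2 <= n)%nat -> N n = sr (fun i => N i * N (n - i)%nat) (S n).

Lemma cat_H m : (2 <= m)%nat -> sr (fun j => INR j * N j * N (m - j)%nat) (S m) = INR m * N m / 2.
Proof. intros Hm. set (S0 := sr _ _).
  assert (E : S0 = sr (fun j => INR (m - j) * N j * N (m - j)%nat) (S m)).
  { unfold S0. rewrite sr_rev. apply sr_ext. intros i Hi. replace (m - (m - i))%nat with i by lia. ring. }
  assert (E2 : S0 + S0 = INR m * N m).
  { rewrite E at 2. unfold S0. rewrite <- sr_plus. rewrite (Nconv m Hm), <- sr_scal. apply sr_ext.
    intros i Hi. rewrite minus_INR by lia. ring. }
  lra. Qed.

Lemma cat_step n : (1 <= n)%nat -> INR (S n) * N (S n) = (4 * INR n - 2) * N n.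
Proof. induction n as [n IH] using (well_founded_induction Wf_nat.lt_wf). intros Hn.
  destruct (Nat.eq_dec n 1) as [->|Hn1].
  - rewrite (Nconv 2) by lia. simpl. rewrite N0, N1. lra.
  - assert (H2 : (2 <= n)%nat) by lia.
    rewrite <- (Rmult_1_r (N (S n))) at 1. 
    assert (HS : INR (S n) * N (S n) = 2 * sr (fun j => INR j * N j * N (S n - j)%nat) (S (S n))).
    { rewrite cat_H by lia. field. }
    rewrite Rmult_1_r, HS. rewrite sr_shift. simpl (INR 0). rewrite Rmult_0_l, Rmult_0_l, Rplus_0_l.
    assert (HP : sr (fun i => INR (S i) * N (S i) * N (S n - S i)%nat) (S n) =
              sr (fun j => 4 * (INR j * N j * N (n - j)%nat) - 2 * (N j * N (n - j)%nat) + (if Nat.eqb j 0 then N n else 0)) (S n)).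
    { apply sr_ext. intros j Hj. replace (S n - S j)%nat with (n - j)%nat by lia.
      destruct (Nat.eq_dec j 0) as [->|Hj0].
      - simpl. rewrite N0, N1, Nat.sub_0_r. ring.
      - destruct (Nat.eq_dec j n) as [->|Hjn].
        + rewrite Nat.sub_diag, N0. destruct n; [lia|]. simpl Nat.eqb. cbv iota. ring.
        + rewrite IH by lia. destruct j; [lia|]. simpl Nat.eqb. cbv iota. ring. }
    rewrite HP, !sr_plus, sr_minus, !sr_scal, cat_H by lia. rewrite <- Nconv by lia.
    rewrite sr_shift. simpl Nat.eqb. rewrite (sr_ext _ (fun _ => 0)) by (intros; reflexivity). rewrite sr_const. 
    field. Qed.

Lemma cat_pos n : (1 <= n)%nat -> 0 < N n.
Proof. induction n; intros Hn; [lia|]. destruct n; [rewrite N1; lra|].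
  assert (H := cat_step (S n) ltac:(lia)). assert (0 < N (S n)) by (apply IHn; lia).
  assert (1 <= INR (S n)) by (apply (le_INR 1); lia). 
  assert (0 < INR (S (S n))) by (apply lt_0_INR; lia).
  assert (0 < INR (S (S n)) * N (S (S n))) by (rewrite H; apply Rmult_lt_0_compat; lra).
  apply (Rmult_lt_reg_l (INR (S (S n)))); lra. Qed.

Lemma cat_upper n : (1 <= n)%nat -> (INR n * N n)^2 * (3 * INR n - 2) <= 16 ^ (n - 1).
Proof. induction n; intros Hn; [lia|]. destruct n.
  - simpl. rewrite N1. lra.
  - assert (IH := IHn ltac:(lia)). replace (S (S n) - 1)%nat with (S (S n - 1)) by lia. rewrite <- (tech_pow_Rmult 16).
    rewrite cat_step by lia. rewrite (S_INR (S n)). set (x := INR (S n)) in *. set (y := N (S n)) in *. assert (1 <= x) by (apply (le_INR 1); lia).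
    assert (P : (4 * x - 2)^2 * (3 * (x+1) - 2) <= 16 * x^2 * (3 * x - 2)) by nra.
    assert (0 <= y^2) by nra.
    apply Rle_trans with (16 * ((x * y)^2 * (3 * x - 2))); [|lra].
    replace ((4 * x - 2) * y) with ((4 * x - 2) * y) by ring.
    assert (Q := Rmult_le_compat_r (y^2) _ _ H0 P). nra. Qed.

Lemma cat_lower n : (2 <= n)%nat -> 16 ^ (n - 1) <= 4 * (INR n - 1) * (INR n * N n)^2.
Proof. induction n; intros Hn; [lia|]. destruct (Nat.eq_dec n 1) as [->|Hn1].
  - rewrite (Nconv 2) by lia. simpl. rewrite N0, N1. lra.
  - assert (IH := IHn ltac:(lia)). replace (S n - 1)%nat with (S (n - 1)) by lia. rewrite <- (tech_pow_Rmult 16).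
    rewrite cat_step by lia. rewrite (S_INR n). set (x := INR n) in *. set (y := N n) in *. assert (2 <= x) by (apply (le_INR 2); lia).
    assert (P : 16 * (4 * (x - 1) * x^2) <= 4 * (x + 1 - 1) * (4 * x - 2)^2) by nra.
    assert (0 <= y^2) by nra.
    assert (Q := Rmult_le_compat_r (y^2) _ _ H0 P). nra. Qed.
End Cat.
Open Scope R_scope.

Definition Gk (T : nat -> list tree) k n := sL (fun t => INR (cc k t)) (T n).
Definition ck (T : nat -> list tree) k := sL (fun t => if caterpillar t then 1 else 0) (T k).

Lemma ck_val (T : nat -> list tree) (hT : forall n, enumerates n (T n)) k : (2 <= k)%nat -> ck T k = 2 ^ (k - 2).
Proof. intros Hk. unfold ck. rewrite sL_filter.
  assert (HP : Permutation (filter caterpillar (T k)) (catlist (k - 2))).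
  { apply NoDup_Permutation. apply NoDup_filter, hT. apply catlist_nodup.
    intros t. rewrite filter_In, catlist_spec, (proj2 (hT k)). split; intros [A B]; split; auto; lia. }
  rewrite (Permutation_length HP), catlist_length, pow_INR. simpl (INR 2). reflexivity. Qed.

Lemma Gk_rec (T : nat -> list tree) (hT : forall n, enumerates n (T n)) k n : (2 <= n)%nat ->
  Gk T k n = (if Nat.eqb n k then ck T k else 0) + sr (fun i => Gk T k i * NN T (n - i)%nat + NN T i * Gk T k (n - i)%nat) (S n).
Proof. intros Hn. unfold Gk at 1. rewrite (decomp T hT n) by auto.
  set (ind := fun t => if caterpillar t && Nat.eqb (leaves t) k then 1 else 0).
  rewrite (sr_ext _ (fun i => sL (fun l => sL (fun r => ind (Node l r)) (T (n - i)%nat)) (T i) +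
                               (Gk T k i * NN T (n - i)%nat + NN T i * Gk T k (n - i)%nat))).
  - rewrite sr_plus. f_equal. rewrite <- (decomp T hT n) by auto.
    destruct (Nat.eqb_spec n k) as [<-|Hnk].
    + unfold ck. apply sL_ext_in. intros t Ht. apply (proj2 (hT n)) in Ht. unfold ind. rewrite Ht, Nat.eqb_refl.
      destruct (caterpillar t); reflexivity.
    + rewrite (sL_ext_in _ (fun _ => 0)). rewrite sL_const; ring. intros t Ht. apply (proj2 (hT n)) in Ht.
      unfold ind. rewrite Ht. destruct (Nat.eqb_spec n k); [lia|]. destruct (caterpillar t); reflexivity.
  - intros i _.
    rewrite (sL_ext_in _ (fun l => sL (fun r => ind (Node l r)) (T (n - i)%nat) + (INR (cc k l) * NN T (n - i)%nat + Gk T k (n - i)%nat))).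
    + rewrite sL_plus, sL_plus. f_equal. rewrite (sL_ext_in _ (fun l => NN T (n - i)%nat * INR (cc k l))) by (intros; ring).
      rewrite sL_scal, sL_const. unfold Gk, NN. ring.
    + intros l _. rewrite (sL_ext_in _ (fun r => ind (Node l r) + (INR (cc k l) + INR (cc k r)))).
      * rewrite sL_plus, sL_plus, sL_const. unfold Gk, NN. ring.
      * intros r _. rewrite cc_node, !plus_INR. unfold ind. destruct (_ && _); simpl; ring.
Qed.

Lemma Gk_formula (T : nat -> list tree) (hT : forall n, enumerates n (T n)) k : (2 <= k)%nat ->
  forall n, Gk T k n = ck T k * (INR (n + 1 - k) * NN T (n + 1 - k)%nat).
Proof. intros Hk n. induction n as [n IH] using (well_founded_induction Wf_nat.lt_wf).
  assert (NC := NN_conv T hT). assert (N0 := NN0 T hT). assert (N1 := NN1 T hT).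
  destruct (Nat.lt_ge_cases n 2) as [Hn|Hn].
  - replace (n + 1 - k)%nat with O by lia. simpl INR. rewrite Rmult_0_l, Rmult_0_r.
    destruct n as [|[|]]; try lia.
    + unfold Gk. rewrite (T0 T hT). reflexivity.
    + unfold Gk. rewrite sL_T1 by auto. unfold cc. simpl. destruct k as [|[|]]; try lia. reflexivity.
  - rewrite Gk_rec by auto.
    assert (HS : sr (fun i => Gk T k i * NN T (n - i)%nat + NN T i * Gk T k (n - i)%nat) (S n)
               = 2 * (ck T k * sr (fun i => INR (i + 1 - k) * NN T (i + 1 - k)%nat * NN T (n - i)%nat) (S n))).
    { rewrite sr_plus. rewrite (sr_rev (fun i => NN T i * Gk T k (n - i)%nat)).
      rewrite (sr_ext (fun i => NN T (n - i)%nat * Gk T k (n - (n - i))%nat) (fun i => Gk T k i * NN T (n - i)%nat)).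
      2:{ intros i Hi. replace (n - (n - i))%nat with i by lia. ring. }
      rewrite <- sr_scal. rewrite (sr_ext (fun i => Gk T k i * NN T (n - i)%nat)
         (fun i => ck T k * (INR (i + 1 - k) * NN T (i + 1 - k)%nat * NN T (n - i)%nat))). ring.
      intros i Hi. destruct (Nat.eq_dec i n) as [->|Hin].
      - rewrite Nat.sub_diag, N0. ring.
      - rewrite IH by lia. ring. }
    rewrite HS.
    destruct (Nat.lt_ge_cases n k) as [Hnk|Hnk].
    + replace (n + 1 - k)%nat with O by lia. destruct (Nat.eqb_spec n k); [lia|].
      rewrite (sr_ext _ (fun _ => 0)). rewrite sr_const. simpl INR. ring.
      intros i Hi. replace (i + 1 - k)%nat with O by lia. simpl INR. ring.
    + set (m := (n + 1 - k)%nat).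
      replace (S n) with ((k - 1) + S m)%nat by (unfold m; lia). rewrite sr_split.
      rewrite (sr_ext _ (fun _ => 0) (k - 1)). rewrite sr_const.
      2:{ intros i Hi. replace (i + 1 - k)%nat with O by lia. simpl INR. ring. }
      rewrite (sr_ext _ (fun j => INR j * NN T j * NN T (m - j)%nat)).
      2:{ intros j Hj. unfold m. replace (k - 1 + j + 1 - k)%nat with j by lia. replace (n - (k - 1 + j))%nat with (n + 1 - k - j)%nat by lia. reflexivity. }
      destruct (Nat.eq_dec m 1) as [Hm|Hm].
      * assert (n = k) by (unfold m in Hm; lia). subst n. rewrite Nat.eqb_refl. rewrite Hm. simpl. rewrite N0, N1. ring.
      * rewrite (cat_H (NN T) NC) by (unfold m; lia). destruct (Nat.eqb_spec n k); [unfold m in Hm; lia|].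
        field. Qed.

Definition Ak (T : nat -> list tree) k n := sL (fun t => if Nat.leb k (gamma t) then 1 else 0) (T n).

Lemma Ak_le_Gk T k n : (1 <= k)%nat -> Ak T k n <= Gk T k n.
Proof. intros Hk. apply sL_le_in. intros t _. destruct (Nat.leb_spec k (gamma t)).
  - apply (le_INR 1). apply cc_pos. lia.
  - apply pos_INR. Qed.

Lemma pow2_16 a : 16 ^ a = 2 ^ (4 * a).
Proof. rewrite pow_mult. f_equal. simpl. ring. Qed.

Lemma Ak_bound (T : nat -> list tree) (hT : forall n, enumerates n (T n)) k n :
  (2 <= n)%nat -> (2 <= k)%nat -> (3 * k <= 2 * n + 2)%nat -> Ak T k n * 2 ^ k <= 2 * INR n * NN T n.
Proof. intros Hn Hk H3.
  assert (NC := NN_conv T hT). assert (N0 := NN0 T hT). assert (N1 := NN1 T hT).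
  assert (HA := Ak_le_Gk T k n ltac:(lia)). rewrite (Gk_formula T hT k Hk n), (ck_val T hT k Hk) in HA.
  set (m := (n + 1 - k)%nat) in *.
  assert (HU := cat_upper (NN T) N0 N1 NC m ltac:(unfold m; lia)).
  assert (HL := cat_lower (NN T) N0 N1 NC n Hn).
  assert (HA0 : 0 <= Ak T k n). { apply sL_nonneg. intros; destruct (Nat.leb _ _); lra. }
  assert (Hm : 3 * INR m - 2 >= INR n - 1).
  { unfold m. rewrite minus_INR by lia. rewrite plus_INR. simpl INR. apply le_INR in H3. rewrite ?mult_INR, ?plus_INR, ?mult_INR in H3. simpl INR in H3. lra. }
  assert (Hn1 : 1 <= INR n - 1). { apply (le_INR 2) in Hn. simpl in Hn. lra. }
  assert (PW : 2 ^ (k - 2) * 2 ^ (k - 2) * (2 ^ k * 2 ^ k) * 16 ^ (m - 1) = 16 ^ (n - 1)).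
  { rewrite !pow2_16, <- !pow_add. f_equal. unfold m. lia. }
  assert (P2k : 0 < 2 ^ (k - 2)) by (apply pow_lt; lra).
  assert (P2k' : 0 < 2 ^ k) by (apply pow_lt; lra).
  assert (NNn : 0 <= NN T n) by apply pos_INR.
  set (X := INR m * NN T m) in *. set (Y := INR n * NN T n) in *.
  assert (X0 : 0 <= X). { unfold X. apply Rmult_le_pos; apply pos_INR. }
  assert (HB : (Ak T k n * 2 ^ k) ^ 2 * (3 * INR m - 2) <= (2 * Y) ^ 2 * (3 * INR m - 2)).
  { apply Rle_trans with ((2 ^ (k - 2) * X) ^ 2 * (2 ^ k) ^ 2 * (3 * INR m - 2)).
    - apply Rmult_le_compat_r; [lra|]. rewrite Rpow_mult_distr. apply Rmult_le_compat_r; [apply pow_le; lra|].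
      apply pow_incr. split; [nra|]. exact HA.
    - apply Rle_trans with (16 ^ (n - 1)).
      + rewrite <- PW. replace ((2 ^ (k - 2) * X) ^ 2 * (2 ^ k) ^ 2 * (3 * INR m - 2)) with
          (2 ^ (k - 2) * 2 ^ (k - 2) * (2 ^ k * 2 ^ k) * (X ^ 2 * (3 * INR m - 2))) by ring.
        apply Rmult_le_compat_l; [|exact HU]. nra.
      + assert (0 <= Y^2) by nra. nra. }
  assert (HC : (Ak T k n * 2 ^ k) ^ 2 <= (2 * Y) ^ 2).
  { apply Rmult_le_reg_r with (3 * INR m - 2); lra. }
  unfold Y in HC. assert (0 <= Ak T k n * 2 ^ k) by nra. assert (0 <= 2 * INR n * NN T n).
  { assert (0 <= INR n) by apply pos_INR. nra. }
  nra. Qed.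
Open Scope R_scope.

Lemma sr_mono_n a p q : (forall i, 0 <= a i) -> (p <= q)%nat -> sr a p <= sr a q.
Proof. intros H Hpq. replace q with (p + (q - p))%nat by lia. rewrite sr_split.
  assert (0 <= sr (fun i => a (p + i)%nat) (q - p)) by (apply sr_nonneg; auto). lra. Qed.

Lemma cauchy_eq (a : nat -> R) M :
  sr (fun n => sr (fun i => a i * a (n - i)%nat) (S n)) (S M) = sr (fun i => a i * sr a (S (M - i))) (S M).
Proof. induction M.
  - simpl. ring.
  - rewrite sr_S, IHM. rewrite (sr_S (fun i => a i * sr a (S (S M - i))) (S M)).
    rewrite (sr_ext (fun i => a i * sr a (S (S M - i))) (fun i => a i * sr a (S (M - i)) + a i * a (S M - i)%nat)).
    + rewrite sr_plus. rewrite Nat.sub_diag. rewrite (sr_S (fun i => a i * a (S M - i)%nat) (S M)). rewrite Nat.sub_diag.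
      simpl (sr a 1). ring.
    + intros i Hi. replace (S (S M - i)) with (S (S (M - i))) by lia. rewrite sr_S. replace (S (M - i)) with (S M - i)%nat by lia. ring. Qed.

Lemma cauchy (a : nat -> R) M : (forall i, 0 <= a i) -> a O = 0 -> (1 <= M)%nat ->
  sr (fun n => sr (fun i => a i * a (n - i)%nat) (S n)) (S M) <= (sr a M) ^ 2.
Proof. intros Ha A0 HM. rewrite cauchy_eq. destruct M as [|M]; [lia|].
  rewrite sr_S. replace (S M - S M)%nat with O by lia. simpl (sr a 1). rewrite A0.
  replace (sr a (S M) ^ 2) with (sr (fun i => a i * sr a (S M)) (S M) + 0).
  - apply Rplus_le_compat; [|lra]. apply sr_le. intros i Hi. destruct i as [|i]; [rewrite A0; lra|]. apply Rmult_le_compat_l; auto. apply sr_mono_n; auto. lia.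
  - rewrite (sr_ext _ (fun i => sr a (S M) * a i)) by (intros; ring). rewrite sr_scal. ring. Qed.

Lemma gf_step (g d : nat -> R) x M : 0 < x -> (forall i, 0 <= g i) -> g O = 0 -> g 1%nat <= 1 -> d O = 0 -> d 1%nat = 0 ->
  (forall n, (2 <= n)%nat -> g n <= sr (fun i => g i * g (n - i)%nat) (S n) - d n) -> (1 <= M)%nat ->
  sr (fun i => g i * x ^ i) (S M) <= x + (sr (fun i => g i * x ^ i) M) ^ 2 - sr (fun n => d n * x ^ n) (S M).
Proof. intros Hx Hg G0 G1 D0 D1 Hrec HM.
  set (a := fun i => g i * x ^ i).
  assert (Ha : forall i, 0 <= a i). { intros i. unfold a. apply Rmult_le_pos; auto. apply pow_le; lra. }
  assert (HC := cauchy a M Ha ltac:(unfold a; rewrite G0; ring) HM).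
  assert (E : forall n, sr (fun i => a i * a (n - i)%nat) (S n) = x ^ n * sr (fun i => g i * g (n - i)%nat) (S n)).
  { intros n. rewrite <- sr_scal. apply sr_ext. intros i Hi. unfold a.
    replace (x ^ n) with (x ^ i * x ^ (n - i)) by (rewrite <- pow_add; f_equal; lia). ring. }
  assert (HP : sr a (S M) <= sr (fun n => sr (fun i => a i * a (n - i)%nat) (S n)) (S M) + sr (fun n => if Nat.eqb n 1 then x else 0) (S M) - sr (fun n => d n * x ^ n) (S M)).
  { rewrite <- sr_plus, <- sr_minus. apply sr_le. intros n Hn. rewrite E.
    destruct n as [|[|n]].
    - unfold a. simpl. rewrite G0, D0. lra.
    - unfold a. simpl. rewrite G0, D1. nra.
    - simpl Nat.eqb. cbv iota. unfold a. assert (H := Hrec (S (S n)) ltac:(lia)).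
      assert (0 <= x ^ S (S n)) by (apply pow_le; lra). nra. }
  assert (HX : sr (fun n => if Nat.eqb n 1 then x else 0) (S M) = x).
  { destruct M; [lia|]. rewrite sr_shift, sr_shift.
    rewrite (sr_ext (fun i => if Nat.eqb (S (S i)) 1 then x else 0) (fun _ => 0)) by (intros; reflexivity).
    rewrite sr_const. simpl. ring. }
  fold a. lra. Qed.

Lemma cat_quarter (T : nat -> list tree) (hT : forall n, enumerates n (T n)) M :
  sr (fun i => NN T i * (/4) ^ i) M <= /2.
Proof. induction M.
  - simpl. lra.
  - destruct M.
    + simpl. rewrite NN0 by auto. lra.
    + assert (H := gf_step (NN T) (fun _ => 0) (/4) (S M) ltac:(lra) (fun i => pos_INR _) (NN0 T hT) ltac:(rewrite NN1 by auto; lra)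
         eq_refl eq_refl ltac:(intros n Hn; rewrite (NN_conv T hT n Hn) at 1; lra) ltac:(lia)).
      rewrite (sr_ext (fun n => 0 * (/4)^n) (fun _ => 0)) in H by (intros; ring). rewrite sr_const in H.
      assert (0 <= sr (fun i => NN T i * (/ 4) ^ i) (S M)). { apply sr_nonneg. intros. apply Rmult_le_pos. apply pos_INR. apply pow_le; lra. }
      nra. Qed.

Definition Fk (T : nat -> list tree) k n := sL (fun t => if Nat.ltb (gamma t) k then 1 else 0) (T n).

Lemma gamma_Leaf : gamma Leaf = 1%nat. Proof. reflexivity. Qed.

Lemma sL_ind_k (T : nat -> list tree) (hT : forall n, enumerates n (T n)) k n :
  sL (fun t => if caterpillar t && Nat.eqb (leaves t) k then 1 else 0) (T n) = if Nat.eqb n k then ck T k else 0.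
Proof. destruct (Nat.eqb_spec n k) as [<-|Hnk].
  + unfold ck. apply sL_ext_in. intros t Ht. apply (proj2 (hT n)) in Ht. rewrite Ht, Nat.eqb_refl.
    destruct (caterpillar t); reflexivity.
  + rewrite (sL_ext_in _ (fun _ => 0)). rewrite sL_const; ring. intros t Ht. apply (proj2 (hT n)) in Ht.
    rewrite Ht. destruct (Nat.eqb_spec n k); [lia|]. destruct (caterpillar t); reflexivity. Qed.

Lemma Fk_rec (T : nat -> list tree) (hT : forall n, enumerates n (T n)) k n : (2 <= n)%nat ->
  Fk T k n <= sr (fun i => Fk T k i * Fk T k (n - i)%nat) (S n) - (if Nat.eqb n k then ck T k else 0).
Proof. intros Hn. rewrite <- (sL_ind_k T hT k n). unfold Fk at 1. rewrite (decomp T hT n) by auto.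
  rewrite (decomp T hT n (fun t => if caterpillar t && Nat.eqb (leaves t) k then 1 else 0)) by auto.
  rewrite <- sr_minus. apply sr_le. intros i _.
  set (b := fun t => if Nat.ltb (gamma t) k then 1 else 0).
  assert (E : Fk T k i * Fk T k (n - i)%nat = sL (fun l => sL (fun r => b l * b r) (T (n - i)%nat)) (T i)).
  { rewrite (sL_ext_in _ (fun l => Fk T k (n - i)%nat * b l)).
    - rewrite sL_scal. unfold Fk. fold b. ring.
    - intros l _. rewrite sL_scal. unfold Fk. fold b. ring. }
  rewrite E. rewrite <- sL_minus. apply sL_le_in. intros l Hl. rewrite <- sL_minus.
  apply sL_le_in. intros r Hr. unfold b.
  assert (Hg := gamma_node_ge (Node l r) l r eq_refl).
  destruct (caterpillar (Node l r) && Nat.eqb (leaves (Node l r)) k) eqn:Ec.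
  - apply andb_prop in Ec as [E1 E2]. apply Nat.eqb_eq in E2. assert (G := gamma_cat _ E1).
    assert (Gl := gamma_le_leaves l). assert (Gr := gamma_le_leaves r).
    pose proof (leaves_pos l). pose proof (leaves_pos r). simpl in E2, G.
    destruct (Nat.ltb_spec (gamma (Node l r)) k); [lia|].
    destruct (Nat.ltb_spec (gamma l) k); [|lia]. destruct (Nat.ltb_spec (gamma r) k); [|lia]. lra.
  - destruct (Nat.ltb_spec (gamma (Node l r)) k).
    + destruct (Nat.ltb_spec (gamma l) k); [|lia]. destruct (Nat.ltb_spec (gamma r) k); [|lia]. lra.
    + destruct (Nat.ltb (gamma l) k), (Nat.ltb (gamma r) k); lra. Qed.

Lemma Fk_le_NN T k n : Fk T k n <= NN T n.
Proof. rewrite NN_sL. apply sL_le_in. intros. destruct (Nat.ltb _ _); lra. Qed.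

Lemma Fk_nonneg T k n : 0 <= Fk T k n.
Proof. apply sL_nonneg. intros. destruct (Nat.ltb _ _); lra. Qed.

Lemma pow_bern_up u k : 0 <= u -> (1 + u) ^ k * (1 - INR k * u) <= 1.
Proof. intros Hu. induction k.
  - simpl. lra.
  - rewrite S_INR. simpl pow. assert (0 <= (1 + u) ^ k) by (apply pow_le; lra).
    assert ((1 + u) * (1 - (INR k + 1) * u) <= 1 - INR k * u).
    { assert (0 <= INR k) by apply pos_INR. nra. }
    nra. Qed.

Lemma Fk_gf (T : nat -> list tree) (hT : forall n, enumerates n (T n)) k n : (7 <= k)%nat ->
  Fk T k n * ((1 + / 2 ^ (k + 1)) / 4) ^ n <= 1.
Proof. intros Hk.
  set (p := 2 ^ k). assert (Hp : 0 < p) by (apply pow_lt; lra).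
  assert (Hkp : 2 * INR k ^ 2 <= p).
  { unfold p. assert (forall j, (7 <= j)%nat -> 2 * INR j ^ 2 <= 2 ^ j).
    { intros j Hj. induction Hj. simpl. lra. rewrite S_INR. simpl pow. assert (7 <= INR m) by (apply (le_INR 7) in Hj; simpl in Hj; lra). nra. }
    auto. }
  set (u := / 2 ^ (k + 1)). assert (Hu : u = / (2 * p)). { unfold u, p. rewrite pow_add. simpl. f_equal. ring. }
  set (x := (1 + u) / 4). set (y := /2 + INR k * u).
  assert (Hu0 : 0 < u) by (rewrite Hu; apply Rinv_0_lt_compat; lra).
  assert (Hk0 : 7 <= INR k) by (apply (le_INR 7) in Hk; simpl in Hk; lra).
  assert (Hku : INR k * u <= /4).
  { rewrite Hu. apply Rmult_le_reg_r with (2 * p); [lra|]. rewrite Rmult_assoc, Rinv_l by lra. nra. }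
  assert (Hy1 : y <= 1) by (unfold y; lra).
  assert (Hx : 0 < x) by (unfold x; lra).
  set (g := Fk T k). set (d := fun n => if Nat.eqb n k then ck T k else 0).
  assert (Hc : ck T k = p / 4). { rewrite (ck_val T hT k) by lia. unfold p. assert (E2 : k = (2 + (k - 2))%nat) by lia. rewrite E2 at 2. rewrite pow_add. simpl. field. }
  assert (Hxk : ck T k * x ^ k >= u / 2).
  { assert (x ^ k >= (/4) ^ k). { apply Rle_ge, pow_incr. unfold x. lra. }
    assert ((/4) ^ k = / (p * p)). { unfold p. rewrite <- Rpow_mult_distr, pow_inv. replace (2*2) with 4 by ring. reflexivity. }
    rewrite Hc, Hu. assert (0 < /(p*p)) by (apply Rinv_0_lt_compat; nra).
    apply Rle_ge. apply Rle_trans with (p / 4 * / (p * p)). right. field. lra. apply Rmult_le_compat_l; lra. }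
  assert (G0 : g O = 0). { unfold g, Fk. rewrite (T0 T hT). reflexivity. }
  assert (G1 : g 1%nat <= 1). { unfold g. rewrite Fk_le_NN, NN1 by auto; lra. }
  assert (Gn : forall i, 0 <= g i) by (intros; apply Fk_nonneg).
  assert (STEP := fun M => gf_step g d x M Hx Gn G0 G1 ltac:(unfold d; destruct (Nat.eqb_spec 0 k); [lia|reflexivity])
       ltac:(unfold d; destruct (Nat.eqb_spec 1 k); [lia|reflexivity]) (fun n Hn => Fk_rec T hT k n Hn)).
  assert (SMALL : forall M, (M < k)%nat -> sr (fun i => g i * x ^ i) (S M) <= y).
  { intros M HM.
    apply Rle_trans with (sr (fun i => (1 + u) ^ k * (NN T i * (/4) ^ i)) (S M)).
    - apply sr_le. intros i Hi. unfold x. rewrite Rdiv_def, Rpow_mult_distr.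
      assert (g i <= NN T i) by apply Fk_le_NN. assert (0 <= g i) by auto.
      assert ((1 + u) ^ i <= (1 + u) ^ k) by (apply Rle_pow; [lra|lia]).
      assert (0 <= (/4) ^ i) by (apply pow_le; lra). assert (0 <= (1+u)^i) by (apply pow_le; lra).
      apply Rle_trans with ((1 + u) ^ i * (NN T i * (/4) ^ i)). { assert (0 <= (NN T i - g i) * ((1+u)^i * (/4)^i)) by (apply Rmult_le_pos; [lra|apply Rmult_le_pos; lra]). nra. } apply Rmult_le_compat_r; [|auto]. 
      apply Rmult_le_pos; [apply pos_INR|lra].
    - rewrite sr_scal. assert (Q := cat_quarter T hT (S M)).
      assert (B := pow_bern_up u k ltac:(lra)). assert (0 <= (1 + u) ^ k) by (apply pow_le; lra).
      assert ((1 + u) ^ k <= 1 + 2 * (INR k * u)).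
      { set (v := (1 + u) ^ k) in *. set (w := INR k * u) in *. rewrite Rmult_comm in B.
        assert (0 < w) by (unfold w; apply Rmult_lt_0_compat; lra).
        assert (A1 : (1 - w) * v * (1 + 2 * w) <= 1 * (1 + 2 * w)) by (apply Rmult_le_compat_r; lra).
        assert (A2 : 0 <= v * w * (1 - 2 * w)) by (apply Rmult_le_pos; [apply Rmult_le_pos|]; lra).
        assert (A3 : (1 - w) * v * (1 + 2 * w) = v + v * w * (1 - 2 * w)) by ring. lra. }
      unfold y. nra. }
  assert (ALL : forall M, sr (fun i => g i * x ^ i) (S M) <= y).
  { intros M. induction M as [M IH] using (well_founded_induction Wf_nat.lt_wf).
    destruct (Nat.lt_ge_cases M k) as [HM|HM]; [auto|].
    assert (S1 := STEP M ltac:(lia)).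
    assert (D : sr (fun n => d n * x ^ n) (S M) = ck T k * x ^ k).
    { replace (S M) with (k + S (M - k))%nat by lia. rewrite sr_split. rewrite sr_shift.
      rewrite (sr_ext (fun n => d n * x ^ n) (fun _ => 0) k). 2:{ intros i Hi. unfold d. destruct (Nat.eqb_spec i k); [lia|]. ring. }
      rewrite (sr_ext (fun i => d (k + S i)%nat * x ^ (k + S i)) (fun _ => 0)). 2:{ intros i Hi. unfold d. destruct (Nat.eqb_spec (k + S i) k); [lia|]. ring. }
      rewrite !sr_const, Nat.add_0_r. unfold d. rewrite Nat.eqb_refl. ring. }
    rewrite D in S1. destruct M; [lia|]. assert (IHM := IH M ltac:(lia)).
    assert (0 <= sr (fun i => g i * x ^ i) (S M)). { apply sr_nonneg. intros. apply Rmult_le_pos; auto. apply pow_le; lra. }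
    assert (sr (fun i => g i * x ^ i) (S M) ^ 2 <= y ^ 2) by (apply pow_incr; lra).
    assert (x + y ^ 2 - y <= u / 2).
    { unfold x, y. assert (INR k ^ 2 * u <= /4). { rewrite Hu. apply Rmult_le_reg_r with (2 * p); [lra|]. rewrite Rmult_assoc, Rinv_l by lra. nra. }
      nra. }
    lra. }
  assert (H := ALL n). rewrite sr_S in H. assert (0 <= sr (fun i => g i * x ^ i) n).
  { apply sr_nonneg. intros. apply Rmult_le_pos; auto. apply pow_le; lra. }
  unfold g in *. lra. Qed.
Open Scope nat_scope.

Lemma pow_ge_lin b : 4 <= b -> 4 * b <= 2 ^ b.
Proof. induction 1; simpl; lia. Qed.
Lemma sq_le_pow b : 4 <= b -> b * b <= 2 ^ b.
Proof. induction 1; [simpl; lia|]. rewrite Nat.pow_succ_r'. nia. Qed.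
Lemma nine_pow j : 10 <= j -> 9 * j * j <= 2 ^ (j + 1).
Proof. induction 1; [simpl; lia|]. replace (S m + 1) with (S (m + 1)) by lia. rewrite Nat.pow_succ_r'. nia. Qed.

Lemma b_small a : 20 <= a -> 4 * Nat.log2 a <= a.
Proof. intros Ha. destruct (Nat.log2_spec a ltac:(lia)) as [H1 H2]. set (b := Nat.log2 a) in *.
  destruct (Nat.le_gt_cases 4 b). pose proof (pow_ge_lin b H). lia. lia. Qed.

Lemma b_sq a : 1 <= a -> Nat.log2 a * Nat.log2 a <= a + 16.
Proof. intros Ha. destruct (Nat.log2_spec a ltac:(lia)) as [H1 H2]. set (b := Nat.log2 a) in *.
  destruct (Nat.le_gt_cases 4 b). pose proof (sq_le_pow b H). lia. nia. Qed.

Lemma k0_facts n : 20 <= n -> let k0 := (2 * n + 2) / 3 in 3 * k0 <= 2 * n + 2 /\ 2 * n <= 3 * k0 /\ 2 * (n * n) <= 2 ^ k0 /\ 10 <= k0.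
Proof. intros Hn k0. pose proof (Nat.div_mod (2*n+2) 3 ltac:(lia)). pose proof (Nat.mod_upper_bound (2*n+2) 3 ltac:(lia)).
  fold k0 in H. assert (3 * k0 <= 2 * n + 2) by lia. assert (2 * n <= 3 * k0) by lia. assert (10 <= k0) by lia.
  pose proof (nine_pow k0 H3). rewrite Nat.pow_add_r in H4. simpl (2 ^ 1) in H4. repeat split; try lia. nia. Qed.

Open Scope R_scope.

Lemma sL_sr_swap {A} (h : nat -> A -> R) l m : sL (fun t => sr (fun j => h j t) m) l = sr (fun j => sL (h j) l) m.
Proof. induction m.
  - simpl. rewrite sL_const. ring.
  - simpl sr. rewrite sL_plus, IHm. reflexivity. Qed.

Lemma count_lb K g m : INR (Nat.min m (g - K)) <= sr (fun j => if Nat.leb (K + 1 + j) g then 1 else 0) m.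
Proof. induction m.
  - simpl. lra.
  - rewrite sr_S. destruct (Nat.leb_spec (K + 1 + m) g).
    + replace (Nat.min (S m) (g - K)) with (S (Nat.min m (g - K))) by lia. rewrite S_INR. lra.
    + replace (Nat.min (S m) (g - K)) with (Nat.min m (g - K)) by lia. lra. Qed.

Lemma gamma_split (g K k0 n : nat) : (g <= n)%nat -> (K <= k0)%nat ->
  INR g <= INR K + sr (fun j => if Nat.leb (K + 1 + j) g then 1 else 0) (k0 - K) + INR n * (if Nat.leb k0 g then 1 else 0).
Proof. intros Hg HK. assert (S0 : 0 <= sr (fun j => if Nat.leb (K + 1 + j) g then 1 else 0) (k0 - K)).
  { apply sr_nonneg. intros. destruct (Nat.leb _ _); lra. }
  assert (0 <= INR K) by apply pos_INR.
  destruct (Nat.leb_spec k0 g).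
  - apply le_INR in Hg. lra.
  - assert (C := count_lb K g (k0 - K)). replace (Nat.min (k0 - K) (g - K)) with (g - K)%nat in C by lia.
    destruct (Nat.le_gt_cases K g).
    + rewrite minus_INR in C by auto. lra.
    + apply lt_INR in H1. lra. Qed.

Lemma geom K m : sr (fun j => / 2 ^ (K + 1 + j)) m <= / 2 ^ K.
Proof. assert (E : forall m, sr (fun j => / 2 ^ (j + 1)) m = 1 - / 2 ^ m).
  { induction m0. simpl. lra. rewrite sr_S, IHm0. rewrite Nat.add_1_r. simpl pow. 
    assert (0 < 2 ^ m0) by (apply pow_lt; lra). field. lra. }
  rewrite (sr_ext _ (fun j => / 2 ^ K * / 2 ^ (j + 1))).
  - rewrite sr_scal, E. assert (0 < / 2 ^ m) by (apply Rinv_0_lt_compat, pow_lt; lra).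
    assert (0 < / 2 ^ K) by (apply Rinv_0_lt_compat, pow_lt; lra). nra.
  - intros i _. rewrite <- Rinv_mult, <- pow_add. f_equal. f_equal. lia. Qed.

Lemma upper (T : nat -> list tree) (hT : forall n, enumerates n (T n)) n : (20 <= Nat.log2 n)%nat ->
  sL (fun t => INR (gamma t)) (T n) <= (INR (Nat.log2 n) + 4) * NN T n.
Proof. intros Ha. assert (Hn0 : (0 < n)%nat). { destruct n; [change (Nat.log2 0) with 0%nat in Ha; lia|lia]. }
  set (a := Nat.log2 n) in *.
  destruct (Nat.log2_spec n Hn0) as [L1 L2]. fold a in L1, L2.
  assert (A4 := pow_ge_lin a ltac:(lia)).
  assert (Hn20 : (20 <= n)%nat) by lia.
  destruct (k0_facts n Hn20) as [F1 [F2 [F3 F4]]]. set (k0 := ((2 * n + 2) / 3)%nat) in *.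
  set (K := S a).
  assert (HK : (K <= k0)%nat) by (unfold K; lia).
  assert (HNN : 0 <= NN T n) by apply pos_INR.
  assert (P : sL (fun t => INR (gamma t)) (T n) <=
     INR K * NN T n + sr (fun j => Ak T (K + 1 + j)%nat n) (k0 - K) + INR n * Ak T k0 n).
  { assert (E : INR K * NN T n + sr (fun j => Ak T (K + 1 + j)%nat n) (k0 - K) + INR n * Ak T k0 n =
      sL (fun t => INR K + sr (fun j => if Nat.leb (K + 1 + j) (gamma t) then 1 else 0) (k0 - K) + INR n * (if Nat.leb k0 (gamma t) then 1 else 0)) (T n)).
    { rewrite !sL_plus, sL_const, sL_scal.
      assert (SW := sL_sr_swap (fun j t => if Nat.leb (K + 1 + j) (gamma t) then 1 else 0) (T n) (k0 - K)).
      cbv beta in SW. rewrite SW. unfold Ak, NN. ring. }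
    rewrite E. apply sL_le_in. intros t Ht. assert (Hg : (gamma t <= n)%nat).
    { rewrite <- (proj1 (proj2 (hT n) t) Ht). apply gamma_le_leaves. }
    assert (G := gamma_split (gamma t) K k0 n Hg HK). lra. }
  assert (Hb : forall k, (2 <= k)%nat -> (3 * k <= 2 * n + 2)%nat -> Ak T k n <= 2 * INR n * NN T n / 2 ^ k).
  { intros k H1 H2. assert (B := Ak_bound T hT k n ltac:(lia) H1 H2). assert (0 < 2 ^ k) by (apply pow_lt; lra).
    apply Rmult_le_reg_r with (2 ^ k); auto. unfold Rdiv. rewrite Rmult_assoc, Rinv_l; lra. }
  assert (S1 : sr (fun j => Ak T (K + 1 + j)%nat n) (k0 - K) <= 2 * INR n * NN T n * / 2 ^ K).
  { apply Rle_trans with (sr (fun j => 2 * INR n * NN T n * / 2 ^ (K + 1 + j)) (k0 - K)).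
    - apply sr_le. intros j Hj. apply Hb; lia.
    - rewrite sr_scal. apply Rmult_le_compat_l. assert (0 <= INR n) by apply pos_INR. nra. apply geom. }
  assert (S2 : INR n * Ak T k0 n <= NN T n).
  { assert (B := Hb k0 ltac:(lia) F1). assert (0 <= INR n) by apply pos_INR.
    assert (P2 : 2 * (INR n * INR n) <= 2 ^ k0). { replace 2 with (INR 2) at 1 by reflexivity. replace (2 ^ k0) with (INR (2 ^ k0)) by (rewrite pow_INR; reflexivity). rewrite <- !mult_INR. apply le_INR. exact F3. }
    assert (0 < 2 ^ k0) by (apply pow_lt; lra).
    apply Rle_trans with (INR n * (2 * INR n * NN T n / 2 ^ k0)). apply Rmult_le_compat_l; auto.
    unfold Rdiv. apply Rmult_le_reg_r with (2 ^ k0); auto. rewrite !Rmult_assoc, Rinv_l by lra. nra. }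
  assert (S3 : 2 * INR n * NN T n * / 2 ^ K <= 2 * NN T n).
  { assert (P2 : INR n <= 2 ^ K). { apply Nat.lt_le_incl in L2. apply le_INR in L2. rewrite pow_INR in L2. simpl INR in L2. exact L2. }
    assert (0 < 2 ^ K) by (apply pow_lt; lra).
    apply Rmult_le_reg_r with (2 ^ K); auto. rewrite Rmult_assoc, Rinv_l by lra. nra. }
  assert (INR K = INR a + 1) by (unfold K; rewrite S_INR; ring). nra. Qed.

Lemma bern_low u m : 0 <= u -> 1 + INR m * u <= (1 + u) ^ m.
Proof. intros Hu. induction m. simpl. lra. rewrite S_INR. simpl pow. assert (0 <= INR m) by apply pos_INR. nra. Qed.

Lemma lower_S (T : nat -> list tree) k n : INR k * (NN T n - Fk T k n) <= sL (fun t => INR (gamma t)) (T n).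
Proof. assert (E : INR k * (NN T n - Fk T k n) = sL (fun t => INR k * (1 - if Nat.ltb (gamma t) k then 1 else 0)) (T n)).
  { rewrite sL_scal, sL_minus, NN_sL. reflexivity. }
  rewrite E. apply sL_le_in. intros t _. destruct (Nat.ltb_spec (gamma t) k).
  - rewrite Rminus_diag, Rmult_0_r. apply pos_INR.
  - rewrite Rminus_0_r, Rmult_1_r. apply le_INR. auto. Qed.

Lemma lower_F (T : nat -> list tree) (hT : forall n, enumerates n (T n)) n : (20 <= Nat.log2 n)%nat ->
  Fk T (Nat.log2 n - Nat.log2 (Nat.log2 n) - 4) n * (INR n ^ 2) <= 128 * NN T n.
Proof. intros Ha. assert (Hn0 : (0 < n)%nat). { destruct n; [change (Nat.log2 0) with 0%nat in Ha; lia|lia]. }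
  set (a := Nat.log2 n) in *. set (b := Nat.log2 a). set (k := (a - b - 4)%nat).
  destruct (Nat.log2_spec n Hn0) as [L1 L2]. fold a in L1, L2.
  destruct (Nat.log2_spec a ltac:(lia)) as [B1 B2]. fold b in B1, B2.
  assert (Hb4 := b_small a Ha). fold b in Hb4.
  assert (Hk : (7 <= k)%nat) by (unfold k; lia).
  assert (NAT : (2 ^ (k + 1) * (4 * a) <= n)%nat).
  { apply Nat.le_trans with (2 ^ (k + 1) * 2 ^ (b + 3))%nat.
    - apply Nat.mul_le_mono_l. rewrite Nat.pow_succ_r' in B2. rewrite Nat.pow_add_r. simpl (2 ^ 3)%nat. lia.
    - rewrite <- Nat.pow_add_r. replace (k + 1 + (b + 3))%nat with a by (unfold k; lia). exact L1. }
  set (u := / 2 ^ (k + 1)).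
  assert (Hu : INR (2 ^ (k + 1)) * u = 1). { unfold u. rewrite pow_INR. simpl INR. apply Rinv_r. apply pow_nonzero. lra. }
  assert (Hu0 : 0 <= u) by (unfold u; left; apply Rinv_0_lt_compat, pow_lt; lra).
  assert (P1 : 2 <= (1 + u) ^ (2 ^ (k + 1))) by (assert (H := bern_low u (2 ^ (k + 1)) Hu0); lra).
  assert (P2 : 2 ^ (4 * a) <= (1 + u) ^ n).
  { apply Rle_trans with ((1 + u) ^ (2 ^ (k + 1) * (4 * a))).
    - rewrite (pow_mult (1 + u)). apply pow_incr. lra.
    - apply Rle_pow; [lra|exact NAT]. }
  assert (G := Fk_gf T hT k n Hk). fold u in G.
  assert (NNn : 0 <= NN T n) by apply pos_INR.
  assert (Hn2 : (2 <= n)%nat). { assert (2 ^ 1 <= 2 ^ a)%nat by (apply Nat.pow_le_mono_r; lia). simpl in H. lia. }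
  assert (HL := cat_lower (NN T) (NN0 T hT) (NN1 T hT) (NN_conv T hT) n Hn2).
  set (N := NN T n) in *. set (F := Fk T k n) in *. set (r := INR n) in *.
  assert (Hr : 20 <= r).
  { unfold r. assert (L1' := le_INR _ _ L1). rewrite pow_INR in L1'. replace (INR 2) with 2 in L1' by reflexivity.
    assert (2 ^ 20 <= 2 ^ a) by (apply Rle_pow; [lra|lia]). simpl in H. lra. }
  assert (F0 : 0 <= F) by apply Fk_nonneg.
  assert (C1 : 4 ^ n <= 8 * r ^ 2 * N).
  { assert (16 ^ (n - 1) = (4 ^ (n - 1)) ^ 2) by (rewrite <- pow_mult, Nat.mul_comm, pow_mult; f_equal; ring).
    assert (E4 : 4 ^ n = 4 * 4 ^ (n - 1)) by (replace n with (S (n - 1)) at 1 by lia; reflexivity).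
    assert (0 <= 4 ^ (n - 1)) by (apply pow_le; lra).
    assert (0 <= r) by lra.
    assert ((4 ^ (n - 1)) ^ 2 <= (2 * r ^ 2 * N) ^ 2).
    { rewrite <- H. apply Rle_trans with (4 * (r - 1) * (r * N) ^ 2); auto.
      assert (0 <= (r * N) ^ 2) by nra. nra. }
    assert (4 ^ (n - 1) <= 2 * r ^ 2 * N). { assert (0 <= 2 * r ^ 2 * N) by nra. nra. }
    lra. }
  assert (C2 : F * (1 + u) ^ n <= 4 ^ n).
  { replace (((1 + u) / 4) ^ n) with ((1 + u) ^ n * / 4 ^ n) in G.
    2:{ rewrite Rdiv_def, Rpow_mult_distr, pow_inv. reflexivity. }
    assert (0 < 4 ^ n) by (apply pow_lt; lra).
    apply Rmult_le_reg_r with (/ 4 ^ n). apply Rinv_0_lt_compat; lra. rewrite Rinv_r by lra. lra. }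
  assert (C3 : r ^ 4 <= 16 * 2 ^ (4 * a)).
  { apply Nat.lt_le_incl in L2. apply le_INR in L2. rewrite pow_INR in L2. replace (INR 2) with 2 in L2 by reflexivity. fold r in L2.
    replace (16 * 2 ^ (4 * a)) with ((2 ^ S a) ^ 4). apply pow_incr; lra.
    rewrite <- pow_mult. replace (S a * 4)%nat with (4 + 4 * a)%nat by lia. rewrite pow_add. simpl. ring. }
  assert (C4 : F * 2 ^ (4 * a) <= 8 * r ^ 2 * N) by nra.
  assert (C5 : F * r ^ 4 <= 128 * r ^ 2 * N) by nra.
  assert (0 < r ^ 2) by nra.
  apply Rmult_le_reg_r with (r ^ 2); auto. nra. Qed.
Open Scope R_scope.

Lemma ln_le' x y : 0 < x -> x <= y -> ln x <= ln y.
Proof. intros Hx Hxy. destruct (Rle_lt_or_eq_dec _ _ Hxy) as [H|H]. left; apply ln_increasing; auto. right; subst; auto. Qed.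

Lemma log2_bounds n : (1 <= n)%nat -> INR (Nat.log2 n) <= log2 (INR n) < INR (Nat.log2 n) + 1.
Proof. intros Hn. destruct (Nat.log2_spec n ltac:(lia)) as [L1 L2]. set (a := Nat.log2 n) in *.
  assert (ln2 : 0 < ln 2) by (rewrite <- ln_1; apply ln_increasing; lra).
  apply le_INR in L1. apply lt_INR in L2. rewrite pow_INR in L1, L2. replace (INR 2) with 2 in L1, L2 by reflexivity.
  assert (P : 0 < 2 ^ a) by (apply pow_lt; lra).
  assert (A1 := ln_le' _ _ P L1). assert (A2 := ln_increasing (INR n) _ ltac:(lra) L2).
  rewrite ln_pow in A1, A2 by lra. rewrite S_INR in A2. unfold log2. split.
  - apply Rmult_le_reg_r with (ln 2); auto. unfold Rdiv. rewrite Rmult_assoc, Rinv_l by lra. lra.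
  - apply Rmult_lt_reg_r with (ln 2); auto. unfold Rdiv. rewrite Rmult_assoc, Rinv_l by lra. lra. Qed.

Lemma corollary4' (T : nat -> list tree)
  (hT : forall n, enumerates n (T n)) :
  Un_cv (fun n => (log2 (INR n) / avg_gamma (T n))%R) 1%R.
Proof. intros eps Heps. set (e := Rmin eps 1). assert (He : 0 < e) by (apply Rmin_pos; lra).
  assert (He1 : e <= 1) by apply Rmin_r. assert (Hee : e <= eps) by apply Rmin_l.
  destruct (INR_unbounded (300 / (e * e) + 20)) as [A HA].
  exists (2 ^ A)%nat. intros n Hn. unfold R_dist.
  assert (Ha : (A <= Nat.log2 n)%nat). { rewrite <- (Nat.log2_pow2 A) by lia. apply Nat.log2_le_mono. lia. }
  set (a := Nat.log2 n) in *. set (b := Nat.log2 a). set (k := (a - b - 4)%nat).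
  assert (aR : 300 / (e * e) + 20 < INR a) by (apply le_INR in Ha; lra).
  assert (Ha20 : (20 <= a)%nat). { apply INR_lt in aR || idtac. assert (20 < INR a).
    { assert (0 <= 300 / (e * e)) by (apply Rmult_le_pos; [lra|left; apply Rinv_0_lt_compat; nra]). lra. }
    apply INR_lt. simpl. lra. }
  assert (Hn0 : (0 < n)%nat) by (pose proof (Nat.pow_nonzero 2 A ltac:(lia)); lia).
  destruct (Nat.log2_spec n Hn0) as [L1 L2]. fold a in L1, L2.
  assert (Hb4 := b_small a Ha20). fold b in Hb4.
  assert (Hbsq := b_sq a ltac:(lia)). fold b in Hbsq.
  assert (U := upper T hT n Ha20). fold a in U.
  assert (LF := lower_F T hT n Ha20). fold a b k in LF.
  assert (LS := lower_S T k n).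
  assert (Hn2 : (2 <= n)%nat). { assert (2 ^ 1 <= 2 ^ a)%nat by (apply Nat.pow_le_mono_r; lia). simpl in H. lia. }
  assert (NP : 0 < NN T n) by (apply (cat_pos (NN T) (NN0 T hT) (NN1 T hT) (NN_conv T hT)); lia).
  assert (FN : Fk T k n <= NN T n) by apply Fk_le_NN.
  assert (F0 : 0 <= Fk T k n) by apply Fk_nonneg.
  assert (LB := log2_bounds n ltac:(lia)). fold a in LB.
  set (aa := INR a) in *. set (bb := INR b) in *. set (r := INR n) in *.
  assert (kk : INR k = aa - bb - 4) by (unfold k, aa, bb; rewrite !minus_INR by lia; simpl; ring).
  assert (Hr1 : 4 * aa <= r).
  { unfold aa, r. assert (H := pow_ge_lin a ltac:(lia)). apply le_INR in H. apply le_INR in L1. rewrite mult_INR in H. simpl (INR 4) in H. lra. }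
  assert (Hr2 : 32 <= r).
  { unfold r. assert (L1' := le_INR _ _ L1). rewrite pow_INR in L1'. replace (INR 2) with 2 in L1' by reflexivity.
    assert (2 ^ 20 <= 2 ^ a) by (apply Rle_pow; [lra|lia]). simpl in H. lra. }
  assert (Hbsq' : bb * bb <= aa + 16). { unfold aa, bb. rewrite <- mult_INR. replace 16 with (INR 16) by (simpl; lra). rewrite <- plus_INR. apply le_INR. lia. }
  assert (bb0 : 0 <= bb) by apply pos_INR.
  assert (aa20 : 20 <= aa). { unfold aa. apply (le_INR 20) in Ha20. assert (INR 20 = 20) by (simpl; lra). lra. }
  assert (Hbb : 4 * bb <= aa). { unfold aa, bb. replace 4 with (INR 4) by (simpl; lra). rewrite <- mult_INR. apply le_INR. lia. }
  set (N := NN T n) in *. set (F := Fk T k n) in *. set (S := sL (fun t => INR (gamma t)) (T n)) in *.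
  assert (E_def : avg_gamma (T n) = S / N) by reflexivity.
  rewrite E_def. set (L := log2 r) in *.
  assert (SL : (aa - bb - 5) * N <= S).
  { rewrite kk in LS. assert (F * r^2 <= 128 * N) by exact LF.
    assert (128 * (aa - bb - 4) <= r ^ 2) by nra.
    assert (0 <= aa - bb - 4) by lra.
    assert ((aa - bb - 4) * F <= N).
    { apply Rmult_le_reg_r with (r ^ 2). nra. nra. }
    nra. }
  set (E := S / N).
  assert (EU : E <= aa + 4). { unfold E. apply Rmult_le_reg_r with N; auto. unfold Rdiv. rewrite Rmult_assoc, Rinv_l by lra. lra. }
  assert (EL : aa - bb - 5 <= E). { unfold E. apply Rmult_le_reg_r with N; auto. unfold Rdiv. rewrite Rmult_assoc, Rinv_l by lra. lra. }
  assert (Z : 300 <= e * e * aa).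
  { assert (0 < e * e) by nra. assert (300 / (e * e) <= aa) by lra.
    apply Rmult_le_compat_l with (r := e * e) in H0; [|lra]. unfold Rdiv in H0. rewrite <- Rmult_assoc, (Rmult_comm (e*e) 300), Rmult_assoc, Rinv_r in H0 by lra. lra. }
  set (w := e * aa).
  assert (W : e * e * aa <= w) by (unfold w; assert (0 <= aa) by lra; nra).
  assert (Bw : bb <= w / 4).
  { assert (bb * bb <= (w / 4) * (w / 4)).
    { assert (aa + 16 <= 17 * aa) by lra. assert (17 * aa <= (e * e * aa) * aa / 16) by nra.
      unfold w. nra. }
    assert (0 <= w) by lra. nra. }
  assert (eE : 3 * w / 4 - 5 <= e * E).
  { assert (e * bb <= w / 4) by nra. assert (e * (aa - bb - 5) <= e * E) by (apply Rmult_le_compat_l; lra).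
    unfold w in *. nra. }
  assert (EP : 0 < E) by nra.
  assert (D1 : L - E < e * E) by lra.
  assert (D2 : - (e * E) < L - E) by lra.
  assert (R1 : Rabs (L / E - 1) = Rabs (L - E) / E).
  { replace (L / E - 1) with ((L - E) / E) by (field; lra). unfold Rdiv. rewrite Rabs_mult, Rabs_inv, (Rabs_pos_eq E); lra. }
  rewrite R1. assert (Rabs (L - E) < e * E) by (apply Rabs_def1; lra).
  apply Rlt_le_trans with e; [|lra]. apply Rmult_lt_reg_r with E; auto. unfold Rdiv. rewrite Rmult_assoc, Rinv_l by lra. lra. Qed.

Theorem corollary4 (T : nat -> list tree)
  (hT : forall n, enumerates n (T n)) :
  Un_cv (fun n => (log2 (INR n) / avg_gamma (T n))%R) 1%R.
Proof. exact (corollary4' T hT). Qed.
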